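(* Let $S\le T_n$ be a transformation monoid and $G$ the normalizer of $S$ in $S_n$. If every element of $SG$ has a square root in $SG$, then every element of $S$ has a square root in $S$.
   Context: A transformation monoid is a subsemigroup of $T_n$ containing the identity map; $G=\{g\in S_n:g^{-1}Sg=S\}$ and $SG=\{sg:s\in S,g\in G\}$, a semigroup. A square root of $x$ in a semigroup $U$ is an element $y\in U$ with $y^2=x$. *)

(* Defs.v *)
From mathcomp Require Import all_boot all_fingroup.
Set Implicit Arguments. Unset Strict Implicit. Unset Printing Implicit Defensive.

Definition tmap (n : nat) := {ffun 'I_n -> 'I_n}.

(* Product in T_n, maps acting on the right: x (f g) = (x f) g. *)
Definition tmul n (f g : tmap n) : tmap n := [ffun x => g (f x)].

Definition tid n : tmap n := [ffun x => x].

Definition is_tmonoid n (S : {set tmap n}) : Prop :=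
  tid n \in S /\ (forall f g, f \in S -> g \in S -> tmul f g \in S).

Definition pmap n (g : {perm 'I_n}) : tmap n := [ffun x => g x].

Definition normalizerT n (S : {set tmap n}) : {set {perm 'I_n}} :=
  [set g | [set tmul (tmul (pmap g^-1) s) (pmap g) | s in S] == S].

Definition SGset n (S : {set tmap n}) : {set tmap n} :=
  [set tmul s (pmap g) | s in S, g in normalizerT S].

Definition has_sqrt n (U : {set tmap n}) (x : tmap n) : Prop :=
  exists2 y, y \in U & tmul y y = x.

(* Main.v *)
Require Import Defs.
From mathcomp Require Import all_boot all_fingroup.

Set Implicit Arguments. Unset Strict Implicit. Unset Printing Implicit Defensive.

Section Aux.
Variable n : nat.
Variable S : {set tmap n}.

Lemma tmul_id_l (f : tmap n) : tmul (tid n) f = f.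
Proof. by apply/ffunP=> x; rewrite !ffunE. Qed.
Lemma tmul_id_r (f : tmap n) : tmul f (tid n) = f.
Proof. by apply/ffunP=> x; rewrite !ffunE. Qed.
Lemma pmap1 : Defs.pmap (1%g : {perm 'I_n}) = tid n.
Proof. by apply/ffunP=> x; rewrite !ffunE perm1. Qed.

Lemma one_in_norm : (1%g : {perm 'I_n}) \in normalizerT S.
Proof.
rewrite inE invg1 pmap1; apply/eqP.
rewrite -[RHS]imset_id; apply: eq_imset => s.
by rewrite tmul_id_l tmul_id_r.
Qed.

Lemma S_sub_SG s : s \in S -> s \in SGset S.
Proof.
move=> Hs; have -> : s = tmul s (Defs.pmap 1%g) by rewrite pmap1 tmul_id_r.
exact: imset2_f Hs one_in_norm.
Qed.

Definition sq (x : tmap n) := tmul x x.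
End Aux.

Theorem corollary4p9 (n : nat) (S : {set tmap n}) :
  is_tmonoid S ->
  (forall x, x \in SGset S -> has_sqrt (SGset S) x) ->
  forall x, x \in S -> has_sqrt S x.
Proof.
move=> [HidS HmulS] Hroot s Hs.
pose A := SGset S.
pose r (x : tmap n) := odflt x [pick y in A | sq y == x].
have Hr : forall x, x \in A -> r x \in A /\ sq (r x) = x.
  move=> x Hx; rewrite /r; case: pickP => [y /andP [Hy /eqP Hyx]|H] //=.
  exfalso; have [y Hy Hyx] := Hroot x Hx.
  by move: (H y); rewrite Hy /sq Hyx eqxx.
have HrA : forall k x, x \in A -> iter k r x \in A.
  by move=> k x Hx; elim: k => //= k IH; case: (Hr _ IH).
have Hsqr : forall k x, x \in A -> iter k (@sq n) (iter k r x) = x.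
  move=> k x Hx; elim: k => // k IH.
  by rewrite iterSr /= (Hr _ (HrA k x Hx)).2.
have HsA : s \in A := S_sub_SG Hs.
pose f (k : 'I_(#|{: tmap n}|).+1) := iter k r s.
have : ~~ injectiveb f.
  apply/negP => /injectiveP Hinj.
  by have := leq_card f Hinj; rewrite card_ord ltnn.
case/injectivePn => i [j Hij Hf].
have key : forall a b : nat, a < b -> iter a r s = iter b r s ->
    exists m, 0 < m /\ iter m (@sq n) s = s.
  move=> a b Hab Heq; exists (b - a); split; first by rewrite subn_gt0.
  have Hsm : s = iter (b - a) r s.
    rewrite -{1}(Hsqr a s HsA) Heq -(subnKC (ltnW Hab)) iterD.
    by rewrite Hsqr ?addKn //; apply: HrA.
  by rewrite {1}Hsm Hsqr.
have [m [Hm Hms]] : exists m, 0 < m /\ iter m (@sq n) s = s.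
  case: (ltngtP i j) => H.
  - exact: key H Hf.
  - exact: key H (esym Hf).
  - by move/val_inj: H => H; rewrite H eqxx in Hij.
exists (iter m.-1 (@sq n) s).
  by elim: m.-1 => //= k IH; exact: HmulS.
by rewrite -{3}Hms -(prednK Hm) iterS.
Qed.
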